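(* Let $t_T=\frac{K_TM_T}{N}$ and $t_R=\frac{K_RM_R}{N}$ be integers with $t_T\ge 1$ and $t_T+t_R\le K_R$, and consider the prefetching and subfile partition described in the context, for an arbitrary demand vector $\mathbf{d}$. Then the set of all small subfiles that need to be delivered, namely $W_{d_j,\mathcal{T},\pi,\pi'}$ (intended for $\text{Rx}_j$) for all $j\in[K_R]$, all $\mathcal{T}\subseteq[K_T]$ with $|\mathcal{T}|=t_T$, all $\mathcal{R}\subseteq[K_R]\setminus\{j\}$ with $|\mathcal{R}|=t_R$, all $\pi\in\Pi_{\mathcal{R}}$ and all $\pi'\in\Pi_{[K_R]\setminus(\mathcal{R}\cup\{j\}),t_T-1}$, can be partitioned into disjoint subsets of size $t_T+t_R$ as $$\bigcup_{\substack{\mathcal{T}\subseteq[K_T]:\ |\mathcal{T}|=t_T\\ \mathcal{R}\subseteq[K_R]:\ |\mathcal{R}|=t_T+t_R\\ \pi\in\Pi^{\mathrm{circ}}_{\mathcal{R}}}}\left\{W_{d_{\pi(l)},\ \mathcal{T}\oplus_{K_T}(l-1),\ \pi[l+1:l+t_R],\ \pi[l+t_R+1:l+t_R+t_T-1]}\ :\ l\in[t_T+t_R]\right\}.$$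
   Context: Setting: $K_T$ transmitters, $K_R$ receivers, a library of $N$ files $W_1,\dots,W_N$ of $F$ packets each ($F$ large enough for all divisions below to be integral), transmitter cache size $M_TF$ packets and receiver cache size $M_RF$ packets. Prefetching: each file $W_n$ is split into $\binom{K_T}{t_T}\binom{K_R}{t_R}$ disjoint equal-size subfiles $W_{n,\mathcal{T},\mathcal{R}}$, one for each $\mathcal{T}\subseteq[K_T]$ with $|\mathcal{T}|=t_T$ and $\mathcal{R}\subseteq[K_R]$ with $|\mathcal{R}|=t_R$. Transmitter $\text{Tx}_i$ caches all $W_{n,\mathcal{T},\mathcal{R}}$ with $i\in\mathcal{T}$; receiver $\text{Rx}_j$ caches all $W_{n,\mathcal{T},\mathcal{R}}$ with $j\in\mathcal{R}$. Receiver $\text{Rx}_j$ requests file $W_{d_j}$ and must receive the subfiles $W_{d_j,\mathcal{T},\mathcal{R}}$ with $j\notin\mathcal{R}$. Notation: for a set $\mathcal{S}$, $\Pi_{\mathcal{S}}$ is the set of permutations (orderings) of $\mathcal{S}$, and for $1\le t\le|\mathcal{S}|$, $\Pi_{\mathcal{S},t}=\bigcup_{\mathcal{A}\subseteq\mathcal{S},|\mathcal{A}|=t}\Pi_{\mathcal{A}}$. $\Pi^{\mathrm{circ}}_{\mathcal{R}}$ is the set of $(|\mathcal{R}|-1)!$ circular permutations of $\mathcal{R}$, each written as a list $\pi=[\pi(1),\dots,\pi(|\mathcal{R}|)]$. For integers $i,j,m$, $i\oplus_m j=1+((i+j-1)\bmod m)$; for a set $\mathcal{T}$, $\mathcal{T}\oplus_m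 j$ is the entrywise application of this operation. For a permutation $\pi$ of a set $\mathcal{S}$ and $j\ge i$, $\pi[i:j]=[\pi(i\oplus_{|\mathcal{S}|}0),\pi(i\oplus_{|\mathcal{S}|}1),\dots,\pi(i\oplus_{|\mathcal{S}|}(j-i))]$. Further partition: for each $j\in[K_R]$, each $\mathcal{T}\subseteq[K_T]$ with $|\mathcal{T}|=t_T$ and each $\mathcal{R}\subseteq[K_R]\setminus\{j\}$ with $|\mathcal{R}|=t_R$, the subfile $W_{d_j,\mathcal{T},\mathcal{R}}$ (to be delivered to $\text{Rx}_j$) is split into $\frac{t_R!\,[K_R-(t_R+1)]!}{[K_R-(t_R+t_T)]!}$ disjoint equal-size smaller subfiles $W_{d_j,\mathcal{T},\pi,\pi'}$, indexed by $\pi\in\Pi_{\mathcal{R}}$ and $\pi'\in\Pi_{[K_R]\setminus(\mathcal{R}\cup\{j\}),t_T-1}$. *)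

(* Defs.v *)
(* Indices are 0-based ordinals: transmitter i+1 of the paper
   is the ordinal i : 'I_KT, receiver j+1 is j : 'I_KR, and list positions are
   0-based (paper's pi(l) is nth _ pi (l-1)). *)
From mathcomp Require Import all_boot.
Set Implicit Arguments.
Unset Strict Implicit.
Unset Printing Implicit Defensive.

Definition is_ordering (K : nat) (S : {set 'I_K}) (p : seq 'I_K) : bool :=
  uniq p && ([set x in p] == S).

Definition Pi_t (K : nat) (S : {set 'I_K}) (t : nat) (p : seq 'I_K) : bool :=
  [&& uniq p, size p == t & all (fun x => x \in S) p].

(* Circular permutations of R: one representative list per rotation class,
   namely the ordering of R starting with its least element. *)
Definition circ_perm (K : nat) (R : {set 'I_K}) (p : seq 'I_K) : bool :=
  is_ordering R p &&
  (if p is x :: _ then all (fun y : 'I_K => (nat_of_ord x <= nat_of_ord y)%N) p else true).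

(* T (+)_K a, entrywise cyclic shift by a (0-based version of
   i |-> 1 + ((i + a - 1) mod K)). *)
Definition oplus_set (K : nat) (T : {set 'I_K}) (a : nat) : {set 'I_K} :=
  [set x : 'I_K | [exists i in T, (x : nat) == ((i + a) %% K)%N]].

(* slice p i len = [p(i (+) 0), ..., p(i (+) (len-1))]  (indices mod |p|),
   i.e. the paper's pi[i : i+len-1]; empty when len = 0. *)
Definition slice (A : Type) (p : seq A) (i len : nat) : seq A :=
  match p with
  | [::] => [::]
  | x0 :: _ => [seq nth x0 p ((i + a) %% size p) | a <- iota 0 len]
  end.

(* A small subfile W_{d_j, T, pi, pi'} delivered to Rx_j is identified by
   (j, T, pi, pi'). *)
Definition item (KT KR : nat) : Type :=
  ('I_KR * {set 'I_KT} * seq 'I_KR * seq 'I_KR)%type.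

Definition subfile_idx (KT KR tT tR : nat) (x : item KT KR) : bool :=
  let: (j, T, p, p') := x in
  [&& #|T| == tT, uniq p, size p == tR, j \notin p &
      Pi_t (~: ([set y in p] :|: [set j])) tT.-1 p'].

(* Element number l (0-based, paper's l = l0 + 1) of the block indexed by
   (T, R, pi):  W_{d_{pi(l)}, T (+) (l-1), pi[l+1 : l+tR],
                  pi[l+tR+1 : l+tR+tT-1]}.  None only if pi is empty. *)
Definition blk (KT KR tT tR : nat) (T : {set 'I_KT}) (p : seq 'I_KR)
    (l : nat) : option (item KT KR) :=
  match p with
  | [::] => None
  | x0 :: _ => Some (nth x0 p l, oplus_set T l,
                     slice p (l + 1) tR, slice p (l + 1 + tR) tT.-1)
  end.

Definition blk_idx (KT KR tT tR : nat) (T : {set 'I_KT}) (R : {set 'I_KR})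
    (p : seq 'I_KR) : bool :=
  [&& #|T| == tT, #|R| == tT + tR & circ_perm R p].

(* Main.v *)
Require Import Defs.
From mathcomp Require Import all_boot zify.
Set Implicit Arguments. Unset Strict Implicit.

Lemma nth_rot_mod (A : Type) (x0 : A) (p : seq A) k i :
  k < size p -> i < size p -> nth x0 (rot k p) i = nth x0 p ((k + i) %% size p).
Proof.
move=> hk hi; rewrite /rot nth_cat size_drop.
case: ltnP => h.
  by rewrite nth_drop modn_small //; lia.
rewrite nth_take; last by lia.
have -> : (k + i) %% size p = i - (size p - k).
  rewrite -(modn_small (_ : i - (size p - k) < size p)); last by lia.
  apply/eqP; rewrite -(eqn_modDr (size p)) -[X in _ == X %[mod _]]addnC.
  have -> : size p + (i - (size p - k)) = k + i by lia.
  by rewrite modnDr.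
by [].
Qed.

Lemma slice_rot (A : Type) (x0 : A) (s : seq A) l :
  slice (x0 :: s) l (size (x0 :: s)) = rot (l %% size (x0 :: s)) (x0 :: s).
Proof.
set p := x0 :: s.
have hn : 0 < size p by [].
apply: (@eq_from_nth _ x0).
  by rewrite /slice /p size_map size_iota size_rot.
rewrite /slice /p -/p size_map size_iota => i hi.
rewrite (nth_map 0) ?size_iota // nth_iota // add0n.
rewrite nth_rot_mod ?ltn_pmod //.
by rewrite modnDml.
Qed.

Lemma slice_cat (A : Type) (p : seq A) i a b :
  slice p i (a + b) = slice p i a ++ slice p (i + a) b.
Proof.
case: p => [|x0 s] //=.
rewrite iotaD map_cat add0n; congr (_ ++ _).
rewrite -{1}(addn0 a) iotaDl -map_comp; apply: eq_map => c /=.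
by rewrite addnA.
Qed.

Lemma size_slice (A : Type) (p : seq A) i a : 0 < size p -> size (slice p i a) = a.
Proof. by case: p => //= x s _; rewrite size_map size_iota. Qed.

Definition shift K (a : nat) (x : 'I_K) : 'I_K :=
  Ordinal (ltn_pmod (x + a) (leq_ltn_trans (leq0n x) (ltn_ord x))).

Lemma oplus_setE K (T : {set 'I_K}) a : oplus_set T a = shift a @: T.
Proof.
apply/setP => x; rewrite in_set; apply/existsP/imsetP.
  by case=> i /andP [hi /eqP hx]; exists i => //; apply: val_inj.
by case=> i hi ->; exists i; rewrite hi /=.
Qed.

Lemma shift_inj K a : injective (@shift K a).
Proof.
move=> x y /(congr1 val) /= /eqP; rewrite eqn_modDr => /eqP.
by rewrite !modn_small // => /val_inj.
Qed.

Lemma card_oplus K (T : {set 'I_K}) a : #|oplus_set T a| = #|T|.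
Proof. by rewrite oplus_setE card_imset //; apply: shift_inj. Qed.

Lemma oplus_comp K (T : {set 'I_K}) a b :
  oplus_set (oplus_set T a) b = oplus_set T (a + b).
Proof.
rewrite !oplus_setE -imset_comp; apply: eq_imset => x; apply: val_inj => /=.
by rewrite modnDml addnA.
Qed.

Lemma oplus_id K (T : {set 'I_K}) c : c %% K = 0 -> oplus_set T c = T.
Proof.
move=> hc; rewrite oplus_setE -[RHS]imset_id; apply: eq_imset => x.
apply: val_inj => /=; by rewrite -modnDmr hc addn0 modn_small.
Qed.

Lemma oplus_inv K (T : {set 'I_K}) l :
  oplus_set (oplus_set T (K - l %% K)) l = T.
Proof.
case: K T => [|K] T; first by apply/setP => -[].
rewrite oplus_comp; apply: oplus_id.
have h := ltn_pmod l (ltn0Sn K).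
by rewrite -modnDmr subnK ?modnn // ltnW.
Qed.

Lemma oplus_inv2 K (T : {set 'I_K}) l :
  oplus_set (oplus_set T l) (K - l %% K) = T.
Proof.
case: K T => [|K] T; first by apply/setP => -[].
rewrite oplus_comp; apply: oplus_id.
have h := ltn_pmod l (ltn0Sn K).
by rewrite -modnDml subnKC ?modnn // ltnW.
Qed.

Lemma oplus_inj K (T1 T2 : {set 'I_K}) l :
  oplus_set T1 l = oplus_set T2 l -> T1 = T2.
Proof.
move=> h; by rewrite -(oplus_inv2 T1 l) h oplus_inv2.
Qed.

Lemma blk_cons KT KR tT tR (T : {set 'I_KT}) (x0 : 'I_KR) s l :
  blk tT tR T (x0 :: s) l = Some (nth x0 (x0 :: s) l, oplus_set T l,
     slice (x0 :: s) (l + 1) tR, slice (x0 :: s) (l + 1 + tR) tT.-1).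
Proof. by []. Qed.

Lemma slice_decomp (A : Type) (x0 : A) s tT tR l :
  0 < tT -> size (x0 :: s) = tT + tR -> l < tT + tR ->
  slice (x0 :: s) l (tT + tR) =
  nth x0 (x0 :: s) l :: (slice (x0 :: s) (l + 1) tR ++ slice (x0 :: s) (l + 1 + tR) tT.-1).
Proof.
move=> ht hs hl.
have -> : tT + tR = 1 + (tR + tT.-1) by lia.
rewrite !slice_cat; congr (_ :: _).
  by rewrite /slice /= addn0 modn_small //; move: hs => /= ->.
Qed.

Lemma rot_rot_ex (A : Type) (p q : seq A) a b :
  size p = size q -> a < size p -> b < size q -> rot a p = rot b q ->
  exists2 k, k < size q & p = rot k q.
Proof.
move=> hs ha hb h.
have hp : p = rot (size q - a) (rot b q).
  by rewrite -h -hs -(size_rot a p) -/(rotr a (rot a p)) rotK.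
rewrite rot_add_mod in hp; try lia.
case: leqP hp => hle hp.
  case: (ltngtP (size q - a + b) (size q)) => hc.
  - by exists (size q - a + b).
  - lia.
  - by exists 0; rewrite ?rot0 ?hp ?hc ?rot_size //; lia.
by exists (size q - a + b - size q) => //; lia.
Qed.

Lemma min_ex K (s : seq 'I_K) : 0 < size s ->
  exists2 x, x \in s & all (fun y : 'I_K => (nat_of_ord x <= nat_of_ord y)%N) s.
Proof.
elim: s => [|a s IH] // _.
case: s IH => [|b s] IH.
  by exists a; rewrite ?inE //= leqnn.
case: IH => // x hx hall.
case: (leqP a x) => h.
  exists a; first by rewrite inE eqxx.
  apply/allP => y; rewrite inE => /orP [/eqP -> //| hy].
  apply: leq_trans h _.
  by move/allP: hall; apply.
exists x; first by rewrite inE hx orbT.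
apply/allP => y; rewrite inE => /orP [/eqP -> | hy]; first by rewrite ltnW.
by move/allP: hall; apply.
Qed.

Lemma ord_size KR (R : {set 'I_KR}) p : is_ordering R p -> size p = #|R|.
Proof.
case/andP => hu /eqP <-; rewrite cardsE; symmetry; exact/card_uniqP.
Qed.

Lemma part1 KT KR tT tR : 1 <= tT ->
  forall (T : {set 'I_KT}) (R : {set 'I_KR}) (p : seq 'I_KR) (l : nat), blk_idx tT tR T R p -> (l < tT + tR)%N ->
     exists2 x, blk tT tR T p l = Some x & @subfile_idx KT KR tT tR x.
Proof.
move=> ht T R p l /and3P [/eqP hT /eqP hR /andP [hord _]] hl.
have hs := ord_size hord; rewrite hR in hs.
case: p hord hs => [|x0 s] hord hs; first by move: hs => /=; lia.
rewrite blk_cons; eexists; first reflexivity.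
have hu : uniq (slice (x0 :: s) l (tT + tR)).
  by rewrite -hs slice_rot rot_uniq; case/andP: hord.
rewrite slice_decomp // in hu.
move: hu; rewrite cons_uniq mem_cat negb_or cat_uniq => /andP [/andP [hj1 hj2] /and3P [hu1 hnh hu2]].
rewrite /subfile_idx; apply/and5P; split => //.
- by rewrite card_oplus hT.
- by rewrite size_slice.
rewrite /Pi_t hu2 size_slice // eqxx andTb andTb.
apply/allP => y hy; rewrite !inE negb_or.
apply/andP; split.
  by apply: contraNN hnh => h; apply/hasP; exists y.
by apply: contraNN hj2 => /eqP <-.
Qed.

Lemma part3 KT KR tT tR : 1 <= tT ->
  (forall (T1 T2 : {set 'I_KT}) (R1 R2 : {set 'I_KR}) (p1 p2 : seq 'I_KR) (l1 l2 : nat),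
     blk_idx tT tR T1 R1 p1 -> blk_idx tT tR T2 R2 p2 ->
     (l1 < tT + tR)%N -> (l2 < tT + tR)%N ->
     blk tT tR T1 p1 l1 = blk tT tR T2 p2 l2 ->
     [/\ T1 = T2, R1 = R2, p1 = p2 & l1 = l2]).
Proof.
move=> ht T1 T2 R1 R2 p1 p2 l1 l2 /and3P [/eqP hT1 /eqP hR1 /andP [hord1 hm1]]
  /and3P [/eqP hT2 /eqP hR2 /andP [hord2 hm2]] hl1 hl2.
have hs1 := ord_size hord1; rewrite hR1 in hs1.
have hs2 := ord_size hord2; rewrite hR2 in hs2.
case: p1 hord1 hm1 hs1 => [|x1 s1] hord1 hm1 hs1; first by move: hs1 => /=; lia.
case: p2 hord2 hm2 hs2 => [|x2 s2] hord2 hm2 hs2; first by move: hs2 => /=; lia.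
rewrite !blk_cons => -[hn hO hsl1' hsl2'].
have hsl1 : slice (x1 :: s1) (l1 + 1) tR = slice (x2 :: s2) (l2 + 1) tR := hsl1'.
have hsl2 : slice (x1 :: s1) (l1 + 1 + tR) tT.-1 = slice (x2 :: s2) (l2 + 1 + tR) tT.-1 := hsl2'.
clear hsl1' hsl2'.
have hrot : rot l1 (x1 :: s1) = rot l2 (x2 :: s2).
  have e1 := slice_rot x1 s1 l1; have e2 := slice_rot x2 s2 l2.
  rewrite hs1 modn_small // in e1; rewrite hs2 modn_small // in e2.
  by rewrite -e1 -e2 !slice_decomp // hn hsl1 hsl2.
have [k hk hp] := @rot_rot_ex _ (x1 :: s1) (x2 :: s2) l1 l2 (etrans hs1 (esym hs2)) ltac:(by rewrite hs1) ltac:(by rewrite hs2) hrot.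
have hmem : (x1 :: s1) =i (x2 :: s2).
  by move=> y; rewrite -(mem_rot l1) hrot mem_rot.
have hu2 : uniq (x2 :: s2) by case/andP: hord2.
have hx : x1 = x2.
  apply: val_inj; apply/eqP; rewrite eqn_leq; apply/andP; split.
    by move/allP: hm1; apply; rewrite hmem mem_head.
  by move/allP: hm2; apply; rewrite -hmem mem_head.
subst x2.
have hk0 : k = 0.
  have : nth x1 (x1 :: s1) 0 = nth x1 (x1 :: s2) k.
    by rewrite hp nth_rot_mod // modn_small ?addn0 // (leq_ltn_trans (leq0n _) hk).
  rewrite [nth _ (x1 :: s1) 0]/= -{1}[x1]/(nth x1 (x1 :: s2) 0) => /eqP.
  by rewrite nth_uniq // ?(leq_ltn_trans (leq0n _) hk) => /eqP <-.
rewrite hk0 rot0 in hp.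
have hR : R1 = R2.
  case/andP: hord1 => _ /eqP <-; case/andP: hord2 => _ /eqP <-.
  by rewrite hp.
have hl : l1 = l2.
  move: hn; rewrite hp => /eqP; rewrite nth_uniq //; first by move/eqP.
  + by move: hs2 => /= ->.
  + by move: hs2 => /= ->.
subst l2; split => //.
exact: oplus_inj hO.
Qed.

Lemma part2 KT KR tT tR : 1 <= tT ->
  (forall x : item KT KR, @subfile_idx KT KR tT tR x ->
     exists (T : {set 'I_KT}) (R : {set 'I_KR}) (p : seq 'I_KR) (l : nat), [/\ blk_idx tT tR T R p, (l < tT + tR)%N &
                         blk tT tR T p l = Some x]).
Proof.
move=> ht [[[j T] p] p'] /and5P [/eqP hT hu /eqP hsp hjp /and3P [hu' /eqP hsp' hall]].
set q := j :: p ++ p'.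
have hq : uniq q.
  rewrite /q cons_uniq mem_cat negb_or hjp cat_uniq hu hu' /= andbT.
  apply/andP; split.
    by apply/negP => hj; move/allP: hall => /(_ _ hj); rewrite !inE eqxx orbT.
  apply/hasP => -[y hy hyp]; move/allP: hall => /(_ _ hy).
  by rewrite !inE hyp.
have hsq : size q = tT + tR by rewrite /q /= size_cat hsp hsp'; lia.
have hq0 : 0 < size q by rewrite hsq; lia.
have [x hx hmin] := min_ex hq0.
set k := index x q.
have hk : k < size q by rewrite index_mem.
case E : (rot k q) => [|x0 s].
  by move: (size_rot k q); rewrite E hsq /=; lia.
have hx0 : x0 = x.
  have := nth_rot_mod x0 hk hq0; rewrite E /= addn0 modn_small //.
  by move=> ->; rewrite nth_index.
set n := tT + tR.
rewrite -/n in hsq.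
set l := (n - k) %% n.
have hn : 0 < n by rewrite /n; lia.
have hl : l < n by apply: ltn_pmod.
have hrr : rot l (rot k q) = q.
  rewrite /l; case: (posnP k) => hk0.
    by rewrite hk0 subn0 modnn !rot0.
  have hk' := hk; rewrite hsq in hk'.
  rewrite modn_small; last by lia.
  rewrite rot_add_mod ?hsq; try lia.
  have -> : n - k + k = n by lia.
  by rewrite leqnn -hsq rot_size.
have hsE : size (x0 :: s) = n by rewrite -E size_rot.
exists (oplus_set T (KT - l %% KT)), [set y in q], (x0 :: s), l.
split => //.
- rewrite /blk_idx card_oplus hT eqxx cardsE.
  move/card_uniqP: (hq) => ->; rewrite hsq eqxx /=.
  rewrite /circ_perm /is_ordering -E rot_uniq hq /=.
  apply/andP; split.
    by apply/eqP/setP => y; rewrite !inE mem_rot.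
  rewrite hx0; apply/allP => y; rewrite mem_rot => hy.
  by move/allP: hmin; apply.
- rewrite blk_cons oplus_inv.
  have hd := slice_decomp ht hsE hl.
  rewrite -/n -{1}hsE slice_rot hsE (modn_small hl) -E hrr /q in hd.
  move/eqP: hd; rewrite eqseq_cons eqseq_cat; last by rewrite size_slice ?hsp // E.
  rewrite -/q E.
  by case/and3P => /eqP <- /eqP <- /eqP <-.
Qed.

Theorem lemma1 (KT KR tT tR : nat) :
  (1 <= tT)%N -> (tT + tR <= KR)%N ->
  (* every block element is a small subfile to be delivered *)
  (forall (T : {set 'I_KT}) (R : {set 'I_KR}) (p : seq 'I_KR) (l : nat), blk_idx tT tR T R p -> (l < tT + tR)%N ->
     exists2 x, blk tT tR T p l = Some x & @subfile_idx KT KR tT tR x)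
  /\
  (* every small subfile to be delivered lies in some block *)
  (forall x : item KT KR, @subfile_idx KT KR tT tR x ->
     exists (T : {set 'I_KT}) (R : {set 'I_KR}) (p : seq 'I_KR) (l : nat), [/\ blk_idx tT tR T R p, (l < tT + tR)%N &
                         blk tT tR T p l = Some x])
  /\
  (* blocks are pairwise disjoint and each has exactly tT + tR elements *)
  (forall (T1 T2 : {set 'I_KT}) (R1 R2 : {set 'I_KR}) (p1 p2 : seq 'I_KR) (l1 l2 : nat),
     blk_idx tT tR T1 R1 p1 -> blk_idx tT tR T2 R2 p2 ->
     (l1 < tT + tR)%N -> (l2 < tT + tR)%N ->
     blk tT tR T1 p1 l1 = blk tT tR T2 p2 l2 ->
     [/\ T1 = T2, R1 = R2, p1 = p2 & l1 = l2]).
Proof.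
move=> ht _; split; first exact: part1.
split; [exact: part2 | exact: part3].
Qed.
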